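(* Let $n$ be a positive integer and let $(D;H)$ be a based diagram of $(K_n;H)$ with $H=v_1v_2\cdots v_nv_1$. If $M(D;H)=M_n$, then $\varepsilon(D;H)=Z(n)$.
   Context: $K_n$ is the complete graph with vertices $v_1,\dots,v_n$. A based diagram $(D;H)$ of $(K_n;H)$ is a diagram of $K_n$ on $S^2$ in which $H$ is drawn on the equator and every other edge diagram lies (apart from its endpoints) in the Northern or Southern Hemisphere; $e_{(i,j)}$ denotes the edge diagram joining $v_i,v_j$. Let $A$ be the boundary of a small regular neighbourhood of $H$. For edge diagrams $e,f$ not in $H$, $\varepsilon_H(e,f)=1$ if $e,f$ lie in the same hemisphere and their endpoints on $A$ alternate along $A$, and $0$ otherwise; $\varepsilon(D;H)$ is the sum of $\varepsilon_H(e,f)$ over all unordered pairs of distinct edge diagrams not in $H$. The matrix $M(D;H)=(a_{(i,j)})$ has $a_{(i,j)}=0$ if $j\le i+1$ or $(i,j)=(1,n)$, and otherwise $a_{(i,j)}=1$ (resp. $-1$) if $e_{(i,j)}$ is in the Northern (resp. Southern) Hemisphere. $Z(n)=\frac14\lfloor \frac n2\rfloor\lfloor\frac{n-1}2\rfloor\lfloor\frac{n-2}2\rfloor\lfloor\frac{n-3}2\rfloor$. The $n\times n$ matrix $M_n=(a_{(i,j)})$ is defined as follows. If $n$ is even: $a_{(i,j)}=0$ if $j\le i+1$ or $(i,j)=(1,n)$; otherwise $a_{(i,j)}=1$ if ($j\ge i+2$ and $\frac{n+2}{2}-i\le j\le n-i$) or ($j\ge i+2$ and $j\ge \frac{3n+2}{2}-i$);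 and $a_{(i,j)}=-1$ in all other cases. If $n$ is odd: $a_{(i,j)}=0$ if $j\le i+1$ or $(i,j)=(1,n)$; otherwise $a_{(i,j)}=1$ if ($j\ge i+2$ and $\frac{n+3}{2}-i\le j\le n-i$) or ($j\ge i+2$ and $j\ge\frac{3n+1}{2}-i$); and $a_{(i,j)}=-1$ in all other cases. *)

(* Defs.v *)
From mathcomp Require Import all_boot all_order all_algebra.
Set Implicit Arguments. Unset Strict Implicit. Unset Printing Implicit Defensive.

Inductive hemisphere := North | South.

Definition hemisphere_eqb (a b : hemisphere) : bool :=
  match a, b with North, North | South, South => true | _, _ => false end.

(* (i,j), 1 <= i < j <= n, is an edge of K_n NOT in H = v_1 v_2 ... v_n v_1 *)
Definition offH (n i j : nat) : bool :=
  [&& 1 <= i, i.+2 <= j, j <= n & ~~ ((i == 1) && (j == n))].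

(* A based diagram (D;H) of (K_n;H), H = v_1...v_nv_1, is recorded by the
   hemisphere  hemi i j  containing the edge diagram e_(i,j) (for offH n i j). *)

Definition alternate (i j k l : nat) : bool :=
  [|| (i < k < j) && (j < l) | (k < i < l) && (l < j)].

Definition epsH (hemi : nat -> nat -> hemisphere) (i j k l : nat) : nat :=
  (hemisphere_eqb (hemi i j) (hemi k l) && alternate i j k l : nat).

(* epsilon(D;H): sum over unordered pairs {e_(i,j), e_(k,l)} of distinct edge
   diagrams not in H (each unordered pair counted once via (i,j) <lex (k,l)) *)
Definition eps (n : nat) (hemi : nat -> nat -> hemisphere) : nat :=
  \sum_(1 <= i < n.+1) \sum_(1 <= j < n.+1) \sum_(1 <= k < n.+1) \sum_(1 <= l < n.+1)
    if [&& offH n i j, offH n k l & (i < k) || ((i == k) && (j < l))]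
    then epsH hemi i j k l else 0.

Definition MDH (n : nat) (hemi : nat -> nat -> hemisphere) (i j : nat) : int :=
  if (j <= i.+1) || ((i == 1) && (j == n)) then 0%R
  else match hemi i j with North => 1%R | South => (-1)%R end.

Definition Mn (n i j : nat) : int :=
  if (j <= i.+1) || ((i == 1) && (j == n)) then 0%R
  else if ~~ odd n then
    (if ((i + 2 <= j) && ((n + 2) %/ 2 - i <= j) && (j <= n - i))
        || ((i + 2 <= j) && ((3 * n + 2) %/ 2 - i <= j))
     then 1%R else (-1)%R)
  else
    (if ((i + 2 <= j) && ((n + 3) %/ 2 - i <= j) && (j <= n - i))
        || ((i + 2 <= j) && ((3 * n + 1) %/ 2 - i <= j))
     then 1%R else (-1)%R).

Definition fourZ (n : nat) : nat := (n %/ 2) * ((n - 1) %/ 2) * ((n - 2) %/ 2) * ((n - 3) %/ 2).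

(* Main.v *)
Require Import Defs.
From mathcomp Require Import all_boot all_order all_algebra.
From mathcomp Require Import zify ring.
Set Implicit Arguments. Unset Strict Implicit. Unset Printing Implicit Defensive.

Lemma reindex_nat n (f g : nat -> nat) (F : nat -> nat) :
  (forall i, i < n -> f i < n) -> (forall i, i < n -> g i < n) ->
  (forall i, i < n -> g (f i) = i) -> (forall i, i < n -> f (g i) = i) ->
  \sum_(0 <= i < n) F (f i) = \sum_(0 <= i < n) F i.
Proof.
move=> fn gn gf fg.
rewrite -(big_map f xpredT F); apply: perm_big.
apply: uniq_perm.
- rewrite map_inj_in_uniq ?iota_uniq //.
  move=> x y; rewrite !mem_iota /= !add0n !subn0 => hx hy e.
  by rewrite -(gf x hx) -(gf y hy) e.
- exact: iota_uniq.
move=> x; rewrite mem_iota add0n subn0 /=; apply/mapP/idP.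
- by case=> y; rewrite mem_iota add0n subn0 /= => h ->; apply: fn.
- move=> xn; exists (g x); first by rewrite mem_iota add0n subn0 gn.
  by rewrite fg.
Qed.

Definition cyc (a b c d : nat) : bool :=
  [|| (a < b < c) && (c < d), (b < c < d) && (d < a),
      (c < d < a) && (a < b) | (d < a < b) && (b < c)].

Notation S4 n F := (\sum_(0 <= a < n) \sum_(0 <= b < n) \sum_(0 <= c < n) \sum_(0 <= d < n) F a b c d).

Lemma reindex4 n (f g : nat -> nat) (F : nat -> nat -> nat -> nat -> nat) :
  (forall i, i < n -> f i < n) -> (forall i, i < n -> g i < n) ->
  (forall i, i < n -> g (f i) = i) -> (forall i, i < n -> f (g i) = i) ->
  S4 n (fun a b c d => F (f a) (f b) (f c) (f d)) = S4 n F.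
Proof.
move=> h1 h2 h3 h4.
rewrite -(reindex_nat (fun a => \sum_(0 <= b < n) \sum_(0 <= c < n) \sum_(0 <= d < n) F a b c d) h1 h2 h3 h4).
apply: eq_big_nat => a _.
rewrite -(reindex_nat (fun b => \sum_(0 <= c < n) \sum_(0 <= d < n) F (f a) b c d) h1 h2 h3 h4).
apply: eq_big_nat => b _.
rewrite -(reindex_nat (fun c => \sum_(0 <= d < n) F (f a) (f b) c d) h1 h2 h3 h4).
apply: eq_big_nat => c _.
by rewrite -(reindex_nat (fun d => F (f a) (f b) (f c) d) h1 h2 h3 h4).
Qed.

Lemma rot4 n (F : nat -> nat -> nat -> nat -> nat) :
  S4 n F = S4 n (fun a b c d => F d a b c).
Proof.
symmetry.
transitivity (\sum_(0 <= a < n) \sum_(0 <= b < n) \sum_(0 <= d < n) \sum_(0 <= c < n) F d a b c).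
  apply: eq_big_nat => a _; apply: eq_big_nat => b _; exact: exchange_big_nat.
transitivity (\sum_(0 <= a < n) \sum_(0 <= d < n) \sum_(0 <= b < n) \sum_(0 <= c < n) F d a b c).
  apply: eq_big_nat => a _; exact: exchange_big_nat.
exact: exchange_big_nat.
Qed.

Lemma S4D n (F G : nat -> nat -> nat -> nat -> nat) :
  S4 n (fun a b c d => F a b c d + G a b c d) = S4 n F + S4 n G.
Proof.
rewrite -big_split; apply: eq_big_nat => a _.
rewrite -big_split; apply: eq_big_nat => b _.
rewrite -big_split; apply: eq_big_nat => c _.
by rewrite -big_split.
Qed.

Lemma S4_ext n (F G : nat -> nat -> nat -> nat -> nat) :
  (forall a b c d, a < n -> b < n -> c < n -> d < n -> F a b c d = G a b c d) ->
  S4 n F = S4 n G.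
Proof.
move=> h; apply: eq_big_nat => a /andP[_ ha]; apply: eq_big_nat => b /andP[_ hb].
apply: eq_big_nat => c /andP[_ hc]; apply: eq_big_nat => d /andP[_ hd]; exact: h.
Qed.

Definition Cyc n (k : nat -> nat -> bool) :=
  S4 n (fun a b c d => nat_of_bool (cyc a b c d && (k a c == k b d))).
Definition Elin n (k : nat -> nat -> bool) :=
  S4 n (fun a b c d => nat_of_bool ((a < b < c) && (c < d) && (k a c == k b d))).

Lemma Cyc_Elin n k : (forall x y, k x y = k y x) -> Cyc n k = 4 * Elin n k.
Proof.
move=> ksym.
pose o1 a b c d := nat_of_bool ((a < b < c) && (c < d) && (k a c == k b d)).
have pt : forall a b c d, nat_of_bool (cyc a b c d && (k a c == k b d)) =
   o1 a b c d + o1 b c d a + o1 c d a b + o1 d a b c.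
  move=> a b c d; rewrite /o1.
  have -> : (k b d == k c a) = (k a c == k b d) by rewrite (ksym c a) eq_sym.
  have -> : (k c a == k d b) = (k a c == k b d) by rewrite (ksym c a) (ksym d b).
  have -> : (k d b == k a c) = (k a c == k b d) by rewrite (ksym d b) eq_sym.
  rewrite /cyc; case: (k a c == k b d); rewrite ?andbT ?andbF; lia.
rewrite /Cyc (S4_ext (G := fun a b c d => o1 a b c d + o1 b c d a + o1 c d a b + o1 d a b c)); last by move=> *; apply: pt.
rewrite !S4D -(rot4 n (fun a b c d => o1 a b c d)).
rewrite -(rot4 n (fun a b c d => o1 b c d a)) -(rot4 n (fun a b c d => o1 c d a b)) /Elin.
rewrite -(rot4 n (fun a b c d => o1 d a b c)) -(rot4 n (fun a b c d => o1 a b c d)).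
by rewrite /o1 /=; set X := \sum_(0 <= a < n) _; lia.
Qed.

Definition sh n x := if x.+1 < n then x.+1 else 0.
Definition shi n x := if x == 0 then n.-1 else x.-1.

Lemma sh_lt n x : x < n -> sh n x < n.
Proof. rewrite /sh; case: ifP => //; lia. Qed.
Lemma shi_lt n x : x < n -> shi n x < n.
Proof. rewrite /shi; case: ifP; lia. Qed.
Lemma shiK n x : x < n -> shi n (sh n x) = x.
Proof. rewrite /sh /shi; case: ifP; case: ifP; lia. Qed.
Lemma shK n x : x < n -> sh n (shi n x) = x.
Proof. rewrite /sh /shi; case: ifP; case: ifP; lia. Qed.
Lemma sh_mod n x : x < n -> sh n x = x.+1 %% n.
Proof.
rewrite /sh; case: ifP => h hx; first by rewrite modn_small.
have -> : x.+1 = n by lia.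
by rewrite modnn.
Qed.

Lemma cyc_sh n a b c d : a < n -> b < n -> c < n -> d < n ->
  cyc (sh n a) (sh n b) (sh n c) (sh n d) = cyc a b c d.
Proof.
move=> *; rewrite /cyc /sh.
case: ifP; case: ifP; case: ifP; case: ifP; move=> *; apply/idP/idP; lia.
Qed.

Lemma Cyc_rot n k : Cyc n k = Cyc n (fun x y => k (sh n x) (sh n y)).
Proof.
rewrite /Cyc -(@reindex4 n (sh n) (shi n)); last first.
- exact: shK.
- exact: shiK.
- exact: shi_lt.
- exact: sh_lt.
apply: S4_ext => a b c d ha hb hc hd.
by rewrite cyc_sh.
Qed.

Lemma Cyc_ext n k k' : (forall x y, x < n -> y < n -> k x y = k' x y) -> Cyc n k = Cyc n k'.
Proof. move=> h; apply: S4_ext => a b c d ha hb hc hd; by rewrite !h. Qed.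

Definition chi n r := (r == 0) || (n %/ 2 < r).
Definition kap n K x y := chi n ((x + y + K) %% n).
Definition CycK n K := Cyc n (kap n K).
Lemma kap_sym n K x y : kap n K x y = kap n K y x.
Proof. by rewrite /kap (addnC x). Qed.

Lemma CycK_rot n K : CycK n K = CycK n (K + 2).
Proof.
rewrite /CycK Cyc_rot; apply: Cyc_ext => x y hx hy.
rewrite /kap !sh_mod //; congr chi.
by rewrite -addnA modnDml addnCA modnDml; congr (_ %% _); lia.
Qed.

Lemma CycK_mod n K : CycK n (K + n) = CycK n K.
Proof.
rewrite /CycK; apply: Cyc_ext => x y hx hy.
by rewrite /kap addnA modnDr.
Qed.

Lemma modcase x n : x < 3 * n ->
  exists2 r, x %% n = r & (x = r /\ r < n) \/ (x = r + n /\ r < n) \/ (x = r + 2 * n /\ r < n).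
Proof.
move=> h; exists (x %% n) => //.
have n0 : 0 < n by lia.
case: (ltnP x n) => h1; first by left; rewrite modn_small.
case: (ltnP x (2 * n)) => h2.
  right; left; split; last by rewrite ltn_mod.
  have e : x = (x - n) + n by lia.
  rewrite {2}e modnDr modn_small; lia.
right; right; split; last by rewrite ltn_mod.
have e : x = 2 * n + (x - 2 * n) by lia.
rewrite {2}e modnMDl modn_small; lia.
Qed.

Definition neg n x := if x == 0 then 0 else n - x.
Lemma neg_lt n x : x < n -> neg n x < n.
Proof. rewrite /neg; case: ifP; lia. Qed.
Lemma negK n x : x < n -> neg n (neg n x) = x.
Proof. rewrite /neg; case: ifP; case: ifP; lia. Qed.

Lemma cyc_neg n a b c d : a < n -> b < n -> c < n -> d < n ->
  cyc (neg n a) (neg n b) (neg n c) (neg n d) = cyc a d c b.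
Proof.
move=> *; rewrite /cyc /neg.
case: ifP; case: ifP; case: ifP; case: ifP; move=> *; apply/idP/idP; lia.
Qed.

Lemma swapbd n (F : nat -> nat -> nat -> nat -> nat) :
  S4 n F = S4 n (fun a b c d => F a d c b).
Proof.
apply: eq_big_nat => a _.
transitivity (\sum_(0 <= b < n) \sum_(0 <= d < n) \sum_(0 <= c < n) F a b c d).
  apply: eq_big_nat => b _; exact: exchange_big_nat.
rewrite exchange_big_nat; apply: eq_big_nat => d _.
exact: exchange_big_nat.
Qed.

Lemma kap_neg m a c : a < 2 * m -> c < 2 * m ->
  kap (2 * m) 2 (neg (2 * m) a) (neg (2 * m) c) = ~~ kap (2 * m) (2 * m - 1) a c.
Proof.
move=> ha hc; rewrite /kap /chi.
have h2 : 2 * m %/ 2 = m by lia.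
rewrite h2.
case: (@modcase (neg (2 * m) a + neg (2 * m) c + 2) (2 * m)).
  rewrite /neg; case: ifP; case: ifP; lia.
move=> r -> hr.
case: (@modcase (a + c + (2 * m - 1)) (2 * m)); first lia.
move=> r' -> hr'.
move: hr; rewrite /neg; case: ifP; case: ifP => *; apply/idP/idP; lia.
Qed.

Lemma CycK_even m : 0 < m -> CycK (2 * m) 2 = CycK (2 * m) (2 * m - 1).
Proof.
move=> m0; rewrite /CycK /Cyc.
rewrite -(@reindex4 (2 * m) (neg (2 * m)) (neg (2 * m))); try (move=> *; by [apply: neg_lt | apply: negK]).
rewrite swapbd; apply: S4_ext => a b c d ha hb hc hd.
rewrite cyc_neg // !kap_neg //.
by rewrite (kap_sym _ _ d b); case: (kap _ _ a c); case: (kap _ _ b d).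
Qed.

Lemma CycK_add2 n K j : CycK n (K + 2 * j) = CycK n K.
Proof.
elim: j => [|j IH]; first by rewrite muln0 addn0.
by rewrite -IH [RHS]CycK_rot; congr CycK; lia.
Qed.

Lemma CycK_const n m t : (n = 2 * m /\ 0 < m) \/ n = 2 * m + 1 ->
  CycK n t = CycK n 2.
Proof.
move=> hn.
have hmod : forall K, CycK n K = CycK n (K + n) by move=> K; rewrite CycK_mod.
case: hn => [[hn m0]|hn].
- case: (boolP (t %% 2 == 0)) => ht.
  + rewrite hmod.
    have -> : t + n = 2 + 2 * ((t + n - 2) %/ 2) by lia.
    by rewrite CycK_add2.
  + rewrite hn CycK_even // -hn hmod.
    have -> : t + n = (n - 1) + 2 * ((t + 1) %/ 2) by lia.
    by rewrite CycK_add2.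
- case: (boolP (t %% 2 == 0)) => ht.
  + rewrite hmod hmod.
    have -> : t + n + n = 2 + 2 * ((t + n + n - 2) %/ 2) by lia.
    by rewrite CycK_add2.
  + rewrite hmod.
    have -> : t + n = 2 + 2 * ((t + n - 2) %/ 2) by lia.
    by rewrite CycK_add2.
Qed.

Lemma count_int n l h : \sum_(0 <= t < n) nat_of_bool (l <= t < h) = minn h n - l.
Proof.
elim: n => [|n IH]; first by rewrite big_geq //; lia.
rewrite big_nat_recr //= IH; lia.
Qed.

Definition G n x y :=
  \sum_(0 <= t < n) nat_of_bool (chi n ((x + t) %% n) == chi n ((y + t) %% n)).

Lemma G_mod n x y : G n x y = G n (x %% n) (y %% n).
Proof. by apply: eq_big_nat => t _; rewrite !modnDml. Qed.

Lemma G_shift1 n x y : G n x.+1 y.+1 = G n x y.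
Proof.
rewrite /G; symmetry; rewrite -(@reindex_nat n (sh n) (shi n)); last first.
- exact: shK.
- exact: shiK.
- exact: shi_lt.
- exact: sh_lt.
apply: eq_big_nat => t /andP[_ ht]; rewrite sh_mod // !modnDmr.
by rewrite !addSn !addnS.
Qed.

Lemma G_shift n x y k : G n (x + k) (y + k) = G n x y.
Proof.
elim: k => [|k IH]; first by rewrite !addn0.
by rewrite !addnS G_shift1.
Qed.

Lemma G0 n m d : (n = 2 * m \/ n = 2 * m + 1) -> 0 < d < n ->
  G n 0 d = if 2 * d <= n then n - 2 * d else 2 * d - n.
Proof.
move=> hn hd.
have hm : n %/ 2 = m by lia.
rewrite /G.
case: (leqP d m) => hdm.
- have e1 : \sum_(0 <= t < n) (nat_of_bool (chi n ((0 + t) %% n) == chi n ((d + t) %% n)) +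
     (nat_of_bool (m + 1 - d <= t < m + 1) + nat_of_bool (0 <= t < 1) + nat_of_bool (n + 1 - d <= t < n)))
     = \sum_(0 <= t < n) 1.
    apply: eq_big_nat => t /andP[_ ht].
    rewrite /chi hm add0n (modn_small ht).
    case: (@modcase (d + t) n); first lia.
    move=> r -> hr; lia.
  rewrite !big_split !count_int /= sum_nat_const_nat in e1.
  move: e1; set S := (X in X + _ = _) => e1.
  have -> : \sum_(0 <= t < n) nat_of_bool (chi n ((0 + t) %% n) == chi n ((d + t) %% n)) = S by [].
  clearbody S.
  case: ifP => ?; lia.
- have e1 : \sum_(0 <= t < n) (nat_of_bool (chi n ((0 + t) %% n) == chi n ((d + t) %% n)) +
     (nat_of_bool (1 <= t < n - d + 1) + nat_of_bool (m + 1 <= t < m + 1 + (n - d))))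
     = \sum_(0 <= t < n) 1.
    apply: eq_big_nat => t /andP[_ ht].
    rewrite /chi hm add0n (modn_small ht).
    case: (@modcase (d + t) n); first lia.
    move=> r -> hr; lia.
  rewrite !big_split !count_int /= sum_nat_const_nat in e1.
  move: e1; set S := (X in X + _ = _) => e1.
  have -> : \sum_(0 <= t < n) nat_of_bool (chi n ((0 + t) %% n) == chi n ((d + t) %% n)) = S by [].
  clearbody S.
  case: ifP => ?; lia.
Qed.

Lemma sum_S4 N n (F : nat -> nat -> nat -> nat -> nat -> nat) :
  \sum_(0 <= t < N) S4 n (F t) = S4 n (fun a b c d => \sum_(0 <= t < N) F t a b c d).
Proof.
rewrite exchange_big_nat; apply: eq_big_nat => a _.
rewrite exchange_big_nat; apply: eq_big_nat => b _.
rewrite exchange_big_nat; apply: eq_big_nat => c _.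
by rewrite exchange_big_nat.
Qed.

Lemma sumCycK n : \sum_(0 <= t < n) CycK n t =
  S4 n (fun a b c d => cyc a b c d * G n (a + c) (b + d)).
Proof.
rewrite /CycK /Cyc sum_S4; apply: S4_ext => a b c d _ _ _ _.
rewrite /G big_distrr /=; apply: eq_big_nat => t _.
by rewrite /kap; case: (cyc a b c d); rewrite ?mul1n ?mul0n.
Qed.

Lemma reindex3 n (f g : nat -> nat) (F : nat -> nat -> nat -> nat) :
  (forall i, i < n -> f i < n) -> (forall i, i < n -> g i < n) ->
  (forall i, i < n -> g (f i) = i) -> (forall i, i < n -> f (g i) = i) ->
  \sum_(0 <= b < n) \sum_(0 <= c < n) \sum_(0 <= d < n) F (f b) (f c) (f d) =
  \sum_(0 <= b < n) \sum_(0 <= c < n) \sum_(0 <= d < n) F b c d.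
Proof.
move=> h1 h2 h3 h4.
rewrite -(reindex_nat (fun b => \sum_(0 <= c < n) \sum_(0 <= d < n) F b c d) h1 h2 h3 h4).
apply: eq_big_nat => b _.
rewrite -(reindex_nat (fun c => \sum_(0 <= d < n) F (f b) c d) h1 h2 h3 h4).
apply: eq_big_nat => c _.
by rewrite -(reindex_nat (fun d => F (f b) (f c) d) h1 h2 h3 h4).
Qed.

Definition inner n a := \sum_(0 <= b < n) \sum_(0 <= c < n) \sum_(0 <= d < n)
   cyc a b c d * G n (a + c) (b + d).

Lemma G_sh n a c b d : a < n -> b < n -> c < n -> d < n ->
  G n (sh n a + sh n c) (sh n b + sh n d) = G n (a + c) (b + d).
Proof.
move=> ha hb hc hd.
rewrite G_mod !sh_mod // !modnDm -G_mod.
have -> : a.+1 + c.+1 = (a + c) + 2 by lia.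
have -> : b.+1 + d.+1 = (b + d) + 2 by lia.
by rewrite G_shift.
Qed.

Lemma inner_sh n a : a < n -> inner n (sh n a) = inner n a.
Proof.
move=> ha; rewrite /inner.
rewrite -(@reindex3 n (sh n) (shi n) (fun b c d => cyc (sh n a) b c d * G n (sh n a + c) (b + d))); last first.
- exact: shK.
- exact: shiK.
- exact: shi_lt.
- exact: sh_lt.
apply: eq_big_nat => b /andP[_ hb]; apply: eq_big_nat => c /andP[_ hc].
apply: eq_big_nat => d /andP[_ hd].
by rewrite cyc_sh // G_sh.
Qed.

Lemma inner_const n a : a < n -> inner n a = inner n 0.
Proof.
elim: a => [//|a IH] h.
have -> : a.+1 = sh n a by rewrite /sh h.
by rewrite inner_sh ?IH //; lia.
Qed.

Lemma S4_inner n : S4 n (fun a b c d => cyc a b c d * G n (a + c) (b + d)) = n * inner n 0.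
Proof.
rewrite -[n in n * _](subn0 n) -sum_nat_const_nat.
by apply: eq_big_nat => a /andP[_ ha]; rewrite -(inner_const ha).
Qed.

Lemma sum3_recr n (F : nat -> nat -> nat -> nat) :
  (forall b c d, F b c d != 0 -> b < c < d) ->
  \sum_(0 <= b < n.+1) \sum_(0 <= c < n.+1) \sum_(0 <= d < n.+1) F b c d =
  \sum_(0 <= b < n) \sum_(0 <= c < n) \sum_(0 <= d < n) F b c d +
  \sum_(0 <= b < n) \sum_(0 <= c < n) F b c n.
Proof.
move=> hF.
have z : forall b c d, ~~ (b < c < d) -> F b c d = 0.
  move=> b c d h; apply/eqP; apply: contraNT h; exact: hF.
rewrite big_nat_recr //= [X in _ + X = _]big1_seq ?addn0; last first.
  move=> c /andP[_]; rewrite mem_index_iota => /andP[_ hc].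
  apply: big1_seq => d /andP[_]; rewrite mem_index_iota => /andP[_ hd].
  apply: z; lia.
rewrite -big_split; apply: eq_big_nat => b /andP[_ hb].
rewrite big_nat_recr //= [X in _ + X = _]big1_seq ?addn0; last first.
  move=> d /andP[_]; rewrite mem_index_iota => /andP[_ hd].
  apply: z; lia.
rewrite -big_split; apply: eq_big_nat => c /andP[_ hc].
by rewrite big_nat_recr.
Qed.

Lemma P2 n (h : nat -> nat) :
  \sum_(0 <= b < n) \sum_(0 <= c < n) nat_of_bool (0 < b < c) * h (b + n - c) =
  \sum_(0 <= k < n) (k - 1) * h k.
Proof.
elim: n h => [|n IH] h; first by rewrite !big_geq.
rewrite big_nat_recr //= [X in _ + X = _]big1_seq ?addn0; last first.
  move=> c /andP[_]; rewrite mem_index_iota => /andP[_ hc].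
  have -> : (0 < n < c) = false by lia.
  by rewrite mul0n.
under eq_big_nat => b /andP[_ hb] do rewrite big_nat_recr //=.
rewrite big_split /=.
rewrite (eq_big_nat _ _ (F2 := fun b => \sum_(0 <= c < n) nat_of_bool (0 < b < c) * (h \o succn) (b + n - c))); last first.
  move=> b /andP[_ hb]; apply: eq_big_nat => c /andP[_ hc] /=; congr (_ * h _); lia.
rewrite IH big_nat_recl //= sub0n mul0n add0n -big_split /=.
apply: eq_big_nat => k /andP[_ hk].
have -> : k + n.+1 - n = k.+1 by lia.
rewrite -mulnDl; congr (_ * _); lia.
Qed.

Definition T3 n (h : nat -> nat) := \sum_(0 <= b < n) \sum_(0 <= c < n) \sum_(0 <= d < n)
   nat_of_bool ((0 < b < c) && (c < d)) * h (b + d - c).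

Lemma T3E n h : T3 n h = \sum_(0 <= k < n) (k - 1) * (n - 1 - k) * h k.
Proof.
elim: n => [|n IH]; first by rewrite /T3 !big_geq.
rewrite /T3 sum3_recr; last first.
  move=> b c d; case: ((0 < b < c) && (c < d)) / idP => hh; rewrite ?mul0n ?eqxx //; lia.
rewrite -/(T3 n h) IH.
rewrite [X in _ + X](eq_big_nat _ _ (F2 := fun b => \sum_(0 <= c < n) nat_of_bool (0 < b < c) * h (b + n - c))); last first.
  move=> b /andP[_ hb]; apply: eq_big_nat => c /andP[_ hc]; congr (_ * _); lia.
rewrite P2 big_nat_recr //= -big_split /=.
have -> : n.+1 - 1 - n = 0 by lia.
rewrite muln0 mul0n.
rewrite addn0; apply: eq_big_nat => k /andP[_ hk].
rewrite -mulnDl; congr (_ * _).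
rewrite -{2}[k - 1]muln1 -mulnDr; congr (_ * _); lia.
Qed.

Definition D N J := J * (J - 1) * (N - J) * (N - J + 1).
Definition phi N j := j * (N - j) * (N - 2 * j).

Lemma D_step N J : 2 * J <= N -> D N J.+1 = D N J + 2 * phi N J.
Proof.
rewrite /D /phi => h.
case: J h => [|J] h; first by rewrite !mul0n !muln0.
have [r ->] : exists r, N = 2 * J.+1 + r by exists (N - 2 * J.+1); lia.
have -> : J.+2 - 1 = J.+1 by lia.
have -> : J.+1 - 1 = J by lia.
have -> : 2 * J.+1 + r - J.+2 = J + r by lia.
have -> : 2 * J.+1 + r - J.+1 = J.+1 + r by lia.
have -> : 2 * J.+1 + r - 2 * J.+1 = r by lia.
ring.
Qed.

Lemma sum_phi N J : 2 * J <= N + 2 -> 2 * (\sum_(0 <= j < J) phi N j) = D N J.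
Proof.
elim: J => [|J IH] h; first by rewrite big_geq.
rewrite big_nat_recr //= mulnDr IH; last lia.
rewrite D_step //; lia.
Qed.

Definition absd n k := if 2 * k <= n then n - 2 * k else 2 * k - n.

Lemma U_split n m : (n = 2 * m \/ n = 2 * m + 1) -> 1 <= m ->
  \sum_(0 <= k < n) (k - 1) * (n - 1 - k) * absd n k =
  \sum_(0 <= j < m) phi (n - 2) j + \sum_(0 <= i < n - m - 1) phi (n - 2) i.
Proof.
move=> hn hm.
rewrite (@big_cat_nat _ _ _ (m + 1)) //=; last lia.
congr (_ + _).
  rewrite addn1 big_nat_recl // sub0n !mul0n add0n.
  apply: eq_big_nat => j /andP[_ hj].
  rewrite /absd /phi.
  have -> : 2 * j.+1 <= n by lia.
  have -> : j.+1 - 1 = j by lia.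
  have -> : n - 1 - j.+1 = n - 2 - j by lia.
  have -> : n - 2 * j.+1 = n - 2 - 2 * j by lia.
  done.
rewrite -{1}[m + 1]add0n big_addn big_nat_rev /= subnDA.
apply: eq_big_nat => i /andP[_ hi].
rewrite /absd /phi.
have -> : 0 + (n - m - 1) - i.+1 + (m + 1) = n - 1 - i by lia.
have -> : 2 * (n - 1 - i) <= n = false by lia.
have -> : n - 1 - i - 1 = n - 2 - i by lia.
have -> : n - 1 - (n - 1 - i) = i by lia.
have -> : 2 * (n - 1 - i) - n = n - 2 - 2 * i by lia.
by rewrite (mulnC (n - 2 - i)).
Qed.



Lemma U_val n : 2 <= n ->
  \sum_(0 <= k < n) (k - 1) * (n - 1 - k) * absd n k = fourZ n.
Proof.
move=> h2.
have [m hn] : exists m, n = 2 * m \/ n = 2 * m + 1.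
  exists (n %/ 2); lia.
have hm : 1 <= m by lia.
rewrite (U_split hn hm).
case: hn => hn.
- have -> : n - m - 1 = m - 1 by lia.
  have e : \sum_(0 <= j < m) phi (n - 2) j = \sum_(0 <= j < m - 1) phi (n - 2) j.
    rewrite -{1}(subnK hm) addn1 big_nat_recr //=.
    have -> : phi (n - 2) (m - 1) = 0.
      rewrite /phi.
      have -> : n - 2 - 2 * (m - 1) = 0 by lia.
      by rewrite muln0.
    by rewrite addn0.
  rewrite e addnn -mul2n sum_phi; last lia.
  rewrite /D /fourZ.
  have -> : n %/ 2 = m by lia.
  have -> : (n - 1) %/ 2 = m - 1 by lia.
  have -> : (n - 2) %/ 2 = m - 1 by lia.
  have -> : (n - 3) %/ 2 = m - 2 by lia.
  have -> : m - 1 - 1 = m - 2 by lia.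
  have -> : n - 2 - (m - 1) = m - 1 by lia.
  have -> : m - 1 + 1 = m by lia.
  ring.
- have -> : n - m - 1 = m by lia.
  rewrite addnn -mul2n sum_phi; last lia.
  rewrite /D /fourZ.
  have -> : n %/ 2 = m by lia.
  have -> : (n - 1) %/ 2 = m by lia.
  have -> : (n - 2) %/ 2 = m - 1 by lia.
  have -> : (n - 3) %/ 2 = m - 1 by lia.
  have -> : n - 2 - m = m - 1 by lia.
  have -> : m - 1 + 1 = m by lia.
  ring.
Qed.

Definition colA n s :=
  if n %% 2 == 0 then ((n %/ 2 + 1 <= s) && (s <= 2 * (n %/ 2))) || (3 * (n %/ 2) + 1 <= s)
  else ((n %/ 2 + 2 <= s) && (s <= 2 * (n %/ 2) + 1)) || (3 * (n %/ 2) + 2 <= s).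

Lemma hemiN n hemi i j :
  (forall i j, 1 <= i <= n -> 1 <= j <= n -> MDH n hemi i j = Mn n i j) ->
  offH n i j -> hemi i j = if colA n (i + j) then North else South.
Proof.
move=> H hoff.
have hi : 1 <= i <= n by move: hoff; rewrite /offH; lia.
have hj : 1 <= j <= n by move: hoff; rewrite /offH; lia.
have := H i j hi hj; rewrite /MDH /Mn.
have -> : (j <= i.+1) || ((i == 1) && (j == n)) = false by move: hoff; rewrite /offH; lia.
have ho : odd n = (n %% 2 == 1) by rewrite modn2; case: (odd n).
rewrite ho.
have hoff' := hoff; move: hoff'; rewrite /offH => hoff'.
case: (boolP (n %% 2 == 1)) => hp /=.
- have -> : ((i + 2 <= j) && ((n + 3) %/ 2 - i <= j) && (j <= n - i))
        || ((i + 2 <= j) && ((3 * n + 1) %/ 2 - i <= j)) = colA n (i + j).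
    rewrite /colA; case: ifP => h0; lia.
  by case: (hemi i j); case: (colA n (i + j)).
- have -> : ((i + 2 <= j) && ((n + 2) %/ 2 - i <= j) && (j <= n - i))
        || ((i + 2 <= j) && ((3 * n + 2) %/ 2 - i <= j)) = colA n (i + j).
    rewrite /colA; case: ifP => h0; lia.
  by case: (hemi i j); case: (colA n (i + j)).
Qed.



Lemma eps_Elin n hemi :
  (forall i j, 1 <= i <= n -> 1 <= j <= n -> MDH n hemi i j = Mn n i j) ->
  eps n hemi = Elin n (fun x y => colA n (x + y + 2)).
Proof.
move=> H.
have pt : forall i j k l, 1 <= i <= n -> 1 <= j <= n -> 1 <= k <= n -> 1 <= l <= n ->
  (if [&& offH n i j, offH n k l & (i < k) || ((i == k) && (j < l))]
   then epsH hemi i j k l else 0) =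
  nat_of_bool ((i < k < j) && (j < l) && (colA n (i + j) == colA n (k + l))).
  move=> i j k l hi hj hk hl.
  case: (boolP ((i < k < j) && (j < l))) => hc.
  - have o1 : offH n i j by rewrite /offH; lia.
    have o2 : offH n k l by rewrite /offH; lia.
    have -> : (i < k) || ((i == k) && (j < l)) by lia.
    rewrite o1 o2 /= /epsH (hemiN H o1) (hemiN H o2).
    have -> : alternate i j k l by rewrite /alternate; lia.
    by case: (colA n (i + j)); case: (colA n (k + l)).
  - rewrite /=; case: ifP => // hh; rewrite /epsH.
    have -> : alternate i j k l = false by move: hh; rewrite /alternate; lia.
    by rewrite andbF.
rewrite /eps.
transitivity (\sum_(1 <= i < n.+1) \sum_(1 <= j < n.+1) \sum_(1 <= k < n.+1) \sum_(1 <= l < n.+1)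
   nat_of_bool ((i < k < j) && (j < l) && (colA n (i + j) == colA n (k + l)))).
  apply: eq_big_nat => i hi; apply: eq_big_nat => j hj; apply: eq_big_nat => k hk.
  apply: eq_big_nat => l hl; apply: pt; lia.
transitivity (\sum_(1 <= i < n.+1) \sum_(1 <= k < n.+1) \sum_(1 <= j < n.+1) \sum_(1 <= l < n.+1)
   nat_of_bool ((i < k < j) && (j < l) && (colA n (i + j) == colA n (k + l)))).
  apply: eq_big_nat => i hi; exact: exchange_big_nat.
rewrite /Elin big_add1 /=; apply: eq_big_nat => a _.
rewrite big_add1 /=; apply: eq_big_nat => b _.
rewrite big_add1 /=; apply: eq_big_nat => c _.
rewrite big_add1 /=; apply: eq_big_nat => d _.
rewrite !ltnS.
have -> : a.+1 + c.+1 = a + c + 2 by lia.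
have -> : b.+1 + d.+1 = b + d + 2 by lia.
done.
Qed.


Lemma inner0 n m : (n = 2 * m \/ n = 2 * m + 1) -> inner n 0 = T3 n (absd n).
Proof.
move=> hn; rewrite /inner /T3.
apply: eq_big_nat => b /andP[_ hb]; apply: eq_big_nat => c /andP[_ hc].
apply: eq_big_nat => d /andP[_ hd].
case: (boolP ((0 < b < c) && (c < d))) => h.
- have -> : cyc 0 b c d by rewrite /cyc; lia.
  have -> : b + d = (b + d - c) + c by lia.
  rewrite -{1}[c]add0n G_shift (G0 hn); last lia.
  rewrite /absd mul1n; case: ifP => ?; case: ifP => ?; lia.
- have -> : cyc 0 b c d = false by rewrite /cyc; apply/idP/idP; lia.
  by rewrite !mul0n.
Qed.

Lemma colA_even n m x y : n = 2 * m -> 0 < m -> x < n -> y < n ->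
  colA n (x + y + 2) = kap n 2 x y.
Proof.
move=> hn hm hx hy; rewrite /colA /kap /chi.
have -> : n %% 2 == 0 by lia.
have -> : n %/ 2 = m by lia.
case: (@modcase (x + y + 2) n); first lia.
move=> r -> hr; apply/idP/idP; lia.
Qed.

Section Odd.
Variables (n m : nat).
Hypothesis hn : n = 2 * m + 1.
Hypothesis hm : 0 < m.

Definition P x y := x + y + 2 == m + 1.

Lemma kapa_if x y : x < n -> y < n ->
  colA n (x + y + 2) = if P x y then false else kap n 2 x y.
Proof.
move=> hx hy; rewrite /colA /kap /chi /P.
have -> : (n %% 2 == 0) = false by lia.
have -> : n %/ 2 = m by lia.
case: (@modcase (x + y + 2) n); first lia.
move=> r -> hr; case: ifP => h; apply/idP/idP; lia.
Qed.

Lemma kapP x y : P x y -> kap n 2 x y.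
Proof.
rewrite /P /kap /chi => h.
have hm2 : n %/ 2 = m by lia.
rewrite hm2 modn_small; lia.
Qed.

Lemma cycP a b c d : cyc a b c d -> ~~ (P a c && P b d).
Proof. rewrite /cyc /P; lia. Qed.


Definition sig k v := if v <= k then k - v else k + n - v.
Lemma sig_lt k v : k < n -> v < n -> sig k v < n.
Proof. rewrite /sig; case: ifP; lia. Qed.
Lemma sigK k v : k < n -> v < n -> sig k (sig k v) = v.
Proof. rewrite /sig; case: ifP; case: ifP; lia. Qed.

Lemma cyc_sig a b c d : a < n -> b < n -> c < n -> d < n -> a + c < n ->
  cyc a (sig (a + c) b) c (sig (a + c) d) = cyc a b c d.
Proof.
move=> *; rewrite /cyc /sig; case: ifP; case: ifP => *; apply/idP/idP; lia.
Qed.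

Lemma kap_sig a b c d : a < n -> b < n -> c < n -> d < n -> P a c -> cyc a b c d ->
  kap n 2 (sig (a + c) b) (sig (a + c) d) = ~~ kap n 2 b d.
Proof.
move=> ha hb hc hd; rewrite /P /kap /chi /sig => hP hcyc.
have -> : n %/ 2 = m by lia.
case: (@modcase (b + d + 2) n); first lia.
move=> r' -> hr'.
case: ifP => h1; case: ifP => h2.
- case: (@modcase (a + c - b + (a + c - d) + 2) n); first lia.
  move=> r -> hr; move: hcyc; rewrite /cyc => hcyc; apply/idP/idP; lia.
- case: (@modcase (a + c - b + (a + c + n - d) + 2) n); first lia.
  move=> r -> hr; move: hcyc; rewrite /cyc => hcyc; apply/idP/idP; lia.
- case: (@modcase (a + c + n - b + (a + c - d) + 2) n); first lia.
  move=> r -> hr; move: hcyc; rewrite /cyc => hcyc; apply/idP/idP; lia.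
- case: (@modcase (a + c + n - b + (a + c + n - d) + 2) n); first lia.
  move=> r -> hr; move: hcyc; rewrite /cyc => hcyc; apply/idP/idP; lia.
Qed.

Lemma core a c : a < n -> c < n ->
  \sum_(0 <= b < n) \sum_(0 <= d < n) nat_of_bool (cyc a b c d && P a c && ~~ kap n 2 b d) =
  \sum_(0 <= b < n) \sum_(0 <= d < n) nat_of_bool (cyc a b c d && P a c && kap n 2 b d).
Proof.
move=> ha hc.
case: (boolP (P a c)) => hP; last first.
  by apply: eq_big_nat => b _; apply: eq_big_nat => d _; rewrite !andbF.
have hk : a + c < n by move: hP; rewrite /P; lia.
have h1 : forall i, i < n -> sig (a + c) i < n by move=> i; exact: sig_lt.
have h2 : forall i, i < n -> sig (a + c) (sig (a + c) i) = i by move=> i; exact: sigK.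
rewrite -(reindex_nat (fun b => \sum_(0 <= d < n) nat_of_bool (cyc a b c d && true && ~~ kap n 2 b d)) h1 h1 h2 h2).
apply: eq_big_nat => b /andP[_ hb].
rewrite -(reindex_nat (fun d => nat_of_bool (cyc a (sig (a + c) b) c d && true && ~~ kap n 2 (sig (a + c) b) d)) h1 h1 h2 h2).
apply: eq_big_nat => d /andP[_ hd].
rewrite cyc_sig ?sig_lt //.
case: (boolP (cyc a b c d)) => hcyc //=.
by rewrite /= kap_sig // negbK.
Qed.

Lemma odd_corr : Cyc n (fun x y => colA n (x + y + 2)) = CycK n 2.
Proof.
rewrite /CycK /Cyc.
pose X a b c d := nat_of_bool (cyc a b c d && ~~ P a c && ~~ P b d && (kap n 2 a c == kap n 2 b d)).
pose A1 a b c d := nat_of_bool (cyc a b c d && P a c && ~~ kap n 2 b d).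
pose A2 a b c d := nat_of_bool (cyc a b c d && P b d && ~~ kap n 2 a c).
pose B1 a b c d := nat_of_bool (cyc a b c d && P a c && kap n 2 b d).
pose B2 a b c d := nat_of_bool (cyc a b c d && P b d && kap n 2 a c).
rewrite (S4_ext (G := fun a b c d => X a b c d + A1 a b c d + A2 a b c d)); last first.
  move=> a b c d ha hb hc hd; rewrite !kapa_if // /X /A1 /A2.
  have := @cycP a b c d; have := @kapP a c; have := @kapP b d.
  case: (P a c); case: (P b d); case: (kap n 2 a c); case: (kap n 2 b d); case: (cyc a b c d);
   move=> h1 h2 h3 //=; try (by have := h1 isT); try (by have := h2 isT); by have := h3 isT.
rewrite [RHS](S4_ext (G := fun a b c d => X a b c d + B1 a b c d + B2 a b c d)); last first.
  move=> a b c d ha hb hc hd; rewrite /X /B1 /B2.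
  have := @cycP a b c d; have := @kapP a c; have := @kapP b d.
  case: (P a c); case: (P b d); case: (kap n 2 a c); case: (kap n 2 b d); case: (cyc a b c d);
   move=> h1 h2 h3 //=; try (by have := h1 isT); try (by have := h2 isT); by have := h3 isT.
rewrite !S4D.
have cyc_rot : forall a b c d, cyc d a b c = cyc a b c d.
  by move=> a b c d; rewrite /cyc; apply/idP/idP; lia.
have e2 : forall F : nat -> nat -> nat -> nat -> nat,
   S4 n F = \sum_(0 <= a < n) \sum_(0 <= c < n) \sum_(0 <= b < n) \sum_(0 <= d < n) F a b c d.
  by move=> F; apply: eq_big_nat => a _; exact: exchange_big_nat.
have eA : S4 n A2 = S4 n A1.
  rewrite (rot4 n A2); apply: S4_ext => a b c d _ _ _ _.
  by rewrite /A1 /A2 cyc_rot kap_sym.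
have eB : S4 n B2 = S4 n B1.
  rewrite (rot4 n B2); apply: S4_ext => a b c d _ _ _ _.
  by rewrite /B1 /B2 cyc_rot kap_sym.
have eAB : S4 n A1 = S4 n B1.
  rewrite (e2 A1) (e2 B1); apply: eq_big_nat => a /andP[_ ha]; apply: eq_big_nat => c /andP[_ hc].
  rewrite /A1 /B1; exact: (core ha hc).
by rewrite eA eB eAB.
Qed.

End Odd.

Unset Implicit Arguments.
Set Strict Implicit.

Theorem lemma2p3 (n : nat) (hemi : nat -> nat -> hemisphere) :
  0 < n ->
  (forall i j, 1 <= i <= n -> 1 <= j <= n -> MDH n hemi i j = Mn n i j) ->
  4 * eps n hemi = fourZ n.
Proof.
move=> n0 H.
rewrite (eps_Elin H).
case: (ltnP n 5) => hn5.
  case: n n0 H hn5 => [|[|[|[|[|n]]]]] //= _ _ _; rewrite /Elin unlock; vm_compute; reflexivity.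
have [m hmn] : exists m, n = 2 * m \/ n = 2 * m + 1 by exists (n %/ 2); lia.
have hm : 1 < m by lia.
rewrite -Cyc_Elin; last by move=> x y; rewrite (addnC x).
have e1 : Cyc n (fun x y => colA n (x + y + 2)) = CycK n 2.
  case: hmn => hmn.
  - rewrite /CycK; apply: Cyc_ext => x y hx hy; apply: (colA_even hmn) => //; lia.
  - apply: (odd_corr hmn); lia.
have e2 : CycK n 2 = inner n 0.
  apply/eqP; rewrite -(eqn_pmul2l n0); apply/eqP.
  rewrite -S4_inner -sumCycK.
  rewrite (eq_big_nat _ _ (F2 := fun _ => CycK n 2)); last first.
    move=> t _; apply: (CycK_const (m := m)); case: hmn => h; [left; split => //; lia | by right].
  by rewrite sum_nat_const_nat subn0.
rewrite e1 e2 (inner0 hmn) T3E U_val //; lia.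
Qed.
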